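(* Let $T_{init}$ be the number of nodes of the initial tree. The expected optimization time of (1+1) GP-single on MO-WMAJORITY is $O(T_{init}+n\log n)$.
   Context: Fix an integer $n\ge 1$ and real weights $w_1\ge w_2\ge\dots\ge w_n>0$. The terminal set is $T=\{x_1,\bar x_1,\dots,x_n,\bar x_n\}$ ($\bar x_i$ is the complement of $x_i$; $x_i$ is called positive). A syntax tree is either the empty tree or a rooted ordered binary tree whose inner nodes are all labelled by the binary function $J$ (join, exactly two ordered children) and whose leaves are labelled by elements of $T$. The complexity $C(X)$ is the number of nodes of $X$ (0 for the empty tree). The leaf list $l$ of $X$ is the sequence of leaf labels in an inorder traversal. WMAJORITY: WMAJORITY$(X)=\sum w_i$ over all $i$ such that $x_i$ occurs in $l$ at least once and at least as often as $\bar x_i$. MO-WMAJORITY$(X)=(\mathrm{WMAJORITY}(X),C(X))$, WMAJORITY to be maximized and $C$ minimized. Mutation (HVL-Prime applied $k$ times): each application chooses uniformly at random one of three operations. Substitute: replace a uniformly random leaf by a uniformly random $u\in T$. Insert: choose a uniformly random node $v$ and uniformly random $u\in T$, replace $v$ by a $J$-node with children $u$ and $v$ in uniformly random order (inserting into the empty tree yields the single leaf $u$). Delete: choose a uniformly random leaf $v$ with parent $p$ and sibling $u$, replace $p$ by $u$ (deleting $p$ and $v$; deleting the only leaf of a one-leaf tree yields the empty tree). Single-operation mutation uses $k=1$. (1+1) GP-single on MO-$F$: start with an initial tree $X$; in each iteration let $Y$ be $X$ mutated with $k=1$, and set $X:=Y$ iff $F(Y)>F(X)$, or $F(Y)=F(X)$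 and $C(Y)\le C(X)$. Expected optimization time: expected number of iterations (fitness evaluations) until the current solution is for the first time optimal, i.e. has maximum possible $F$-value and, among such trees, minimum complexity. *)

(* Defs.v *)
From Stdlib Require Import Reals List Arith Lia ClassicalDescription.
Open Scope R_scope.

(* Literal (i, true) = x_(i+1), (i, false) = complement of x_(i+1); indices 0..n-1. *)
Definition lit := (nat * bool)%type.

(* Non-empty syntax trees; the possibly-empty tree is [option stree]. *)
Inductive stree : Type :=
| Leaf (i : nat) (pos : bool)
| J (a b : stree).

Definition tree := option stree.

Fixpoint ssize (s : stree) : nat :=
  match s with Leaf _ _ => 1%nat | J a b => S (ssize a + ssize b) end.

Definition cplx (X : tree) : nat := match X with None => 0%nat | Some s => ssize s end.

Fixpoint leaves (s : stree) : list lit :=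
  match s with Leaf i b => (i, b) :: nil | J a b => leaves a ++ leaves b end.

Definition leaflist (X : tree) : list lit :=
  match X with None => nil | Some s => leaves s end.

Definition nleaves (s : stree) : nat := length (leaves s).

Definition terminals (n : nat) : list lit :=
  flat_map (fun i => (i, true) :: (i, false) :: nil) (seq 0 n).

Definition valid (n : nat) (X : tree) : Prop :=
  forall l, In l (leaflist X) -> (fst l < n)%nat.

Definition occ (i : nat) (b : bool) (X : tree) : nat :=
  length (filter (fun l : lit => andb (Nat.eqb (fst l) i) (Bool.eqb (snd l) b)) (leaflist X)).

Definition wmaj (n : nat) (w : nat -> R) (X : tree) : R :=
  fold_right Rplus 0
    (map (fun i => if andb (Nat.leb 1 (occ i true X)) (Nat.leb (occ i false X) (occ i true X))
                   then w i else 0) (seq 0 n)).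

(* Substitute: replace the j-th leaf (inorder, 0-based) by u *)
Fixpoint subst_at (s : stree) (j : nat) (u : lit) : stree :=
  match s with
  | Leaf _ _ => Leaf (fst u) (snd u)
  | J a b => if Nat.ltb j (nleaves a) then J (subst_at a j u) b
             else J a (subst_at b (j - nleaves a) u)
  end.

(* Insert: replace the k-th node (preorder, 0-based) v by J(u,v) (b = true)
   or J(v,u) (b = false) *)
Fixpoint insert_at (s : stree) (k : nat) (u : lit) (b : bool) : stree :=
  let new v := if b then J (Leaf (fst u) (snd u)) v else J v (Leaf (fst u) (snd u)) in
  match k with
  | O => new s
  | S k' =>
    match s with
    | Leaf _ _ => new s
    | J a c => if Nat.ltb k' (ssize a) then J (insert_at a k' u b) c
               else J a (insert_at c (k' - ssize a) u b)
    end
  end.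

(* Delete: remove the j-th leaf v, its parent p being replaced by the sibling
   of v; deleting the only leaf of a one-leaf tree yields the empty tree. *)
Fixpoint delete_at (s : stree) (j : nat) : tree :=
  match s with
  | Leaf _ _ => None
  | J a b =>
    if Nat.ltb j (nleaves a) then
      match delete_at a j with None => Some b | Some a' => Some (J a' b) end
    else
      match delete_at b (j - nleaves a) with None => Some a | Some b' => Some (J a b') end
  end.

(* One application of HVL-Prime (k = 1), as a finite list of
   (probability, outcome) pairs. Each of the three operations has prob 1/3. *)
Definition mutate (n : nat) (X : tree) : list (R * tree) :=
  let T := terminals n in
  let m := INR (length T) in
  match X with
  | None =>
      (* substitute / delete have no leaf to act on: the tree is unchanged *)
      ((/3, None) :: nil)
      ++ map (fun u => (/3 * /m, Some (Leaf (fst u) (snd u)))) T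
      ++ ((/3, None) :: nil)
  | Some s =>
      let L := INR (nleaves s) in
      let K := INR (ssize s) in
      flat_map (fun j => map (fun u => (/3 * /L * /m, Some (subst_at s j u))) T)
               (seq 0 (nleaves s))
      ++ flat_map (fun k => flat_map (fun u =>
              map (fun b => (/3 * /K * /m * /2, Some (insert_at s k u b)))
                  (true :: false :: nil)) T)
           (seq 0 (ssize s))
      ++ map (fun j => (/3 * /L, delete_at s j)) (seq 0 (nleaves s))
  end.

Definition accept (n : nat) (w : nat -> R) (X Y : tree) : bool :=
  if Rlt_dec (wmaj n w X) (wmaj n w Y) then true
  else if Req_EM_T (wmaj n w Y) (wmaj n w X) then Nat.leb (cplx Y) (cplx X)
  else false.

Definition optimal (n : nat) (w : nat -> R) (X : tree) : Prop :=
  (forall Y, valid n Y -> wmaj n w Y <= wmaj n w X) /\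
  (forall Y, valid n Y -> wmaj n w Y = wmaj n w X -> (cplx X <= cplx Y)%nat).

(* surv n w t X = Pr[X_0, ..., X_t are all non-optimal] for the run started
   at X_0 = X, i.e. Pr[T_opt > t]. *)
Fixpoint surv (n : nat) (w : nat -> R) (t : nat) (X : tree) : R :=
  if excluded_middle_informative (optimal n w X) then 0 else
  match t with
  | O => 1
  | S t' =>
      fold_right Rplus 0
        (map (fun pY => fst pY *
                 surv n w t' (if accept n w X (snd pY) then snd pY else X))
             (mutate n X))
  end.

(* Partial sums of E[T_opt] = sum_{t >= 0} Pr[T_opt > t]. *)
Definition exp_time_partial (n : nat) (w : nat -> R) (X : tree) (N : nat) : R :=
  fold_right Rplus 0 (map (fun t => surv n w t X) (seq 0 N)).

(* Main.v *)
Require Import Defs.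
From Stdlib Require Import Reals List Arith Lia Lra ClassicalDescription.
Open Scope R_scope.

Definition sumR {A} (l : list A) (f : A -> R) : R := fold_right Rplus 0 (map f l).

Lemma sumR_cons {A} (x:A) l f : sumR (x::l) f = f x + sumR l f.
Proof. reflexivity. Qed.
Lemma sumR_nil {A} (f:A->R) : sumR nil f = 0.
Proof. reflexivity. Qed.
Lemma sumR_app {A} (l1 l2 : list A) f : sumR (l1++l2) f = sumR l1 f + sumR l2 f.
Proof. induction l1; simpl. rewrite sumR_nil; lra. rewrite !sumR_cons, IHl1; lra. Qed.
Lemma sumR_map {A B} (g:A->B) l f : sumR (map g l) f = sumR l (fun x => f (g x)).
Proof. unfold sumR; rewrite map_map; reflexivity. Qed.
Lemma sumR_flat_map {A B} (g:A->list B) l f :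
  sumR (flat_map g l) f = sumR l (fun x => sumR (g x) f).
Proof. induction l; simpl. reflexivity. rewrite sumR_app, sumR_cons, IHl. reflexivity. Qed.
Lemma sumR_ext {A} (l:list A) f g : (forall x, In x l -> f x = g x) -> sumR l f = sumR l g.
Proof. induction l; intros H; simpl. reflexivity. rewrite !sumR_cons, H, IHl; simpl; auto; intros; apply H; simpl; auto. Qed.
Lemma sumR_le {A} (l:list A) f g : (forall x, In x l -> f x <= g x) -> sumR l f <= sumR l g.
Proof. induction l; intros H; simpl. rewrite !sumR_nil; lra.
  rewrite !sumR_cons. apply Rplus_le_compat; auto with datatypes. Qed.
Lemma sumR_plus {A} (l:list A) f g : sumR l (fun x => f x + g x) = sumR l f + sumR l g.
Proof. induction l; simpl. rewrite !sumR_nil; lra. rewrite !sumR_cons, IHl; lra. Qed.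
Lemma sumR_minus {A} (l:list A) f g : sumR l (fun x => f x - g x) = sumR l f - sumR l g.
Proof. induction l; simpl. rewrite !sumR_nil; lra. rewrite !sumR_cons, IHl; lra. Qed.
Lemma sumR_scal {A} (l:list A) c f : sumR l (fun x => c * f x) = c * sumR l f.
Proof. induction l; simpl. rewrite !sumR_nil; lra. rewrite !sumR_cons, IHl; lra. Qed.
Lemma sumR_const {A} (l:list A) c : sumR l (fun _ => c) = INR (length l) * c.
Proof. induction l; simpl length. rewrite sumR_nil; simpl; lra.
  rewrite sumR_cons, IHl, S_INR; lra. Qed.
Lemma sumR_nonneg {A} (l:list A) f : (forall x, In x l -> 0 <= f x) -> 0 <= sumR l f.
Proof. intros H. replace 0 with (sumR l (fun _ => 0)).
  apply sumR_le; auto. rewrite sumR_const; lra. Qed.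
Lemma sumR_ge_term {A} (l:list A) f k : (forall x, In x l -> 0 <= f x) -> In k l -> f k <= sumR l f.
Proof. induction l; intros H Hk; simpl in Hk. contradiction.
  rewrite sumR_cons. destruct Hk as [<-|Hk].
  - assert (0 <= sumR l f) by (apply sumR_nonneg; auto with datatypes). lra.
  - assert (f k <= sumR l f) by (apply IHl; auto with datatypes).
    assert (0 <= f a) by auto with datatypes. lra. Qed.
Lemma sumR_swap {A B} (l1:list A) (l2:list B) f :
  sumR l1 (fun x => sumR l2 (fun y => f x y)) = sumR l2 (fun y => sumR l1 (fun x => f x y)).
Proof. induction l1; simpl.
  - rewrite sumR_nil. symmetry. replace 0 with (sumR l2 (fun _ => 0)).
    apply sumR_ext; intros; apply sumR_nil. rewrite sumR_const; lra.
  - rewrite sumR_cons, IHl1, <- sumR_plus. apply sumR_ext; intros; rewrite sumR_cons; reflexivity.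
Qed.
Lemma sumR_seq_single m : forall a k f, (forall i, i <> k -> f i = 0) ->
  (a <= k < a + m)%nat -> sumR (seq a m) f = f k.
Proof. induction m; intros a k f H Hk. lia.
  simpl seq. rewrite sumR_cons. destruct (Nat.eq_dec a k) as [<-|Hne].
  - replace (sumR (seq (S a) m) f) with 0. lra.
    symmetry. replace 0 with (sumR (seq (S a) m) (fun _ => 0)).
    apply sumR_ext. intros x Hx. apply in_seq in Hx. apply H. lia.
    rewrite sumR_const; lra.
  - rewrite H by auto. rewrite (IHm (S a) k f H). lra. lia. Qed.
Lemma sumR_nth {A} (l:list A) d f : sumR (seq 0 (length l)) (fun j => f (nth j l d)) = sumR l f.
Proof. induction l. reflexivity. simpl length. simpl seq.
  rewrite <- seq_shift, sumR_cons, sumR_map, sumR_cons. simpl. rewrite IHl. reflexivity. Qed.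
Lemma INR_filter {A} (P:A->bool) l : INR (length (filter P l)) = sumR l (fun i => if P i then 1 else 0).
Proof. induction l; simpl. reflexivity. rewrite sumR_cons. destruct (P a); simpl length.
  rewrite S_INR, IHl; lra. rewrite IHl; lra. Qed.

Definition mt (i:nat) (b:bool) (x:lit) : bool := andb (Nat.eqb (fst x) i) (Bool.eqb (snd x) b).
Definition cnt (l:list lit) i b : nat := length (filter (mt i b) l).
Lemma cnt_app l1 l2 i b : cnt (l1++l2) i b = (cnt l1 i b + cnt l2 i b)%nat.
Proof. unfold cnt. rewrite filter_app, length_app. reflexivity. Qed.
Lemma cnt_cons x l i b : cnt (x::l) i b = ((if mt i b x then 1 else 0) + cnt l i b)%nat.
Proof. unfold cnt; simpl. destruct (mt i b x); reflexivity. Qed.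
Lemma cnt_ins l1 l2 x i b : cnt (l1++x::l2) i b = ((if mt i b x then 1 else 0) + cnt (l1++l2) i b)%nat.
Proof. rewrite !cnt_app, cnt_cons. lia. Qed.

Definition exc (p q : nat) : bool := andb (Nat.leb 1 p) (Nat.leb q p).
Definition ex l i := exc (cnt l i true) (cnt l i false).
Definition wm n (w:nat->R) l := fold_right Rplus 0 (map (fun i => if ex l i then w i else 0) (seq 0 n)).
Lemma wmaj_wm n w X : wmaj n w X = wm n w (leaflist X).
Proof. reflexivity. Qed.
Definition uu n l : nat := length (filter (fun i => negb (ex l i)) (seq 0 n)).
Definition Phi n l : nat := (length l + 2 * uu n l - n)%nat.
Definition validl n (l:list lit) := forall x, In x l -> (fst x < n)%nat.

Lemma ex_other l l' i : (forall b, cnt l' i b = cnt l i b) -> ex l' i = ex l i.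
Proof. intros H; unfold ex; rewrite !H; reflexivity. Qed.

Lemma mt_other i b x : i <> fst x -> mt i b x = false.
Proof. intros H; unfold mt. destruct (Nat.eqb_spec (fst x) i). congruence. reflexivity. Qed.

Lemma sigma2 n l f : validl n l ->
  sumR l f = sumR (seq 0 n) (fun i => INR (cnt l i true) * f (i,true) + INR (cnt l i false) * f (i,false)).
Proof.
  induction l as [|x l IH]; intros Hv.
  - rewrite sumR_nil. replace 0 with (sumR (seq 0 n) (fun _ => 0)).
    apply sumR_ext; intros; unfold cnt; simpl; lra. rewrite sumR_const; lra.
  - rewrite sumR_cons, IH by (intros y Hy; apply Hv; simpl; auto).
    rewrite (sumR_ext _ (fun i => INR (cnt (x::l) i true) * f (i,true) + INR (cnt (x::l) i false) * f (i,false)) (fun i => ((if mt i true x then 1 else 0) * f (i,true) + (if mt i false x then 1 else 0) * f (i,false))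
      + (INR (cnt l i true) * f (i,true) + INR (cnt l i false) * f (i,false)))).
    2:{ intros i _. rewrite !cnt_cons, !plus_INR. destruct (mt i true x), (mt i false x); simpl; lra. }
    rewrite (sumR_plus _ (fun i => ((if mt i true x then 1 else 0) * f (i,true) + (if mt i false x then 1 else 0) * f (i,false)))
      (fun i => (INR (cnt l i true) * f (i,true) + INR (cnt l i false) * f (i,false)))). f_equal.
    rewrite (sumR_seq_single n 0 (fst x)).
    + destruct x as [k b]; unfold mt; simpl. rewrite Nat.eqb_refl. destruct b; simpl; lra.
    + intros i Hi. rewrite !mt_other by auto. lra.
    + assert (fst x < n)%nat by (apply Hv; simpl; auto). lia.
Qed.

Lemma INR_n_sum n : INR n = sumR (seq 0 n) (fun _ => 1).
Proof. rewrite sumR_const, length_seq; lra. Qed.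

Lemma uu_R n l : INR (uu n l) = sumR (seq 0 n) (fun i => if ex l i then 0 else 1).
Proof. unfold uu. rewrite INR_filter. apply sumR_ext; intros; destruct (ex l x); reflexivity. Qed.

Lemma length_R n l : validl n l ->
  INR (length l) = sumR (seq 0 n) (fun i => INR (cnt l i true) + INR (cnt l i false)).
Proof. intros Hv. rewrite <- (Rmult_1_r (INR (length l))), <- sumR_const.
  rewrite (sigma2 n l (fun _ => 1) Hv). apply sumR_ext; intros; lra. Qed.

Lemma uu_le n l : (uu n l <= n)%nat.
Proof. unfold uu. rewrite <- (length_seq n 0) at 2. apply filter_length_le. Qed.

Lemma P1 n l : validl n l -> (n <= length l + uu n l)%nat.
Proof. intros Hv. apply INR_le. rewrite plus_INR, uu_R, length_R with (n:=n) by auto.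
  rewrite INR_n_sum, <- sumR_plus. apply sumR_le. intros i _.
  pose proof (pos_INR (cnt l i false)); pose proof (pos_INR (cnt l i true)).
  unfold ex. destruct (exc (cnt l i true) (cnt l i false)) eqn:E.
  - unfold exc in E. apply andb_prop in E as [E1 _]. apply Nat.leb_le in E1.
    apply le_INR in E1. simpl in E1. lra.
  - lra.
Qed.

Lemma sum_change n (f g : nat -> R) k : (k < n)%nat -> (forall i, i <> k -> f i = g i) ->
  sumR (seq 0 n) f - f k = sumR (seq 0 n) g - g k.
Proof. intros Hk H. assert (sumR (seq 0 n) f - sumR (seq 0 n) g = f k - g k).
  { rewrite <- sumR_minus. apply (sumR_seq_single n 0 k (fun x => f x - g x)).
    intros i Hi; rewrite H; auto; lra. lia. } lra. Qed.

Lemma wm_change n w l l' k : (k < n)%nat -> (forall i, i <> k -> ex l' i = ex l i) ->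
  wm n w l' - (if ex l' k then w k else 0) = wm n w l - (if ex l k then w k else 0).
Proof. intros Hk H. unfold wm. fold (sumR (seq 0 n) (fun i => if ex l' i then w i else 0)).
  fold (sumR (seq 0 n) (fun i => if ex l i then w i else 0)).
  apply (sum_change n (fun i => if ex l' i then w i else 0) (fun i => if ex l i then w i else 0)); auto.
  intros i Hi; rewrite H; auto. Qed.

Lemma uu_change n l l' k : (k < n)%nat -> (forall i, i <> k -> ex l' i = ex l i) ->
  (uu n l' + (if ex l' k then 1 else 0) = uu n l + (if ex l k then 1 else 0))%nat.
Proof. intros Hk H. apply INR_eq. rewrite !plus_INR, !uu_R.
  pose proof (sum_change n (fun i => if ex l' i then 0 else 1) (fun i => if ex l i then 0 else 1) k Hk).
  assert (forall i, i <> k -> (if ex l' i then 0 else 1) = (if ex l i then 0 else 1)) as HH by (intros i Hi; rewrite H; auto).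
  specialize (H0 HH). cbv beta in H0. destruct (ex l' k), (ex l k); simpl in *; lra. Qed.

Lemma ssize_leaves s : S (ssize s) = (2 * length (leaves s))%nat.
Proof. induction s; simpl. reflexivity. rewrite length_app. lia. Qed.

Lemma leaves_ne s : (1 <= length (leaves s))%nat.
Proof. pose proof (ssize_leaves s). lia. Qed.

Lemma cplx_L X : cplx X = (2 * length (leaflist X) - 1)%nat.
Proof. destruct X as [s|]; simpl. pose proof (ssize_leaves s). lia. reflexivity. Qed.

Lemma subst_lem s : forall j u, (j < nleaves s)%nat -> exists l1 a l2,
  leaves s = l1 ++ a :: l2 /\ leaves (subst_at s j u) = l1 ++ (fst u, snd u) :: l2.
Proof. induction s as [i b|a IHa c IHc]; intros j u Hj.
  - exists nil, (i,b), nil. simpl. auto.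
  - unfold nleaves in Hj; simpl in Hj; rewrite length_app in Hj. simpl.
    destruct (Nat.ltb_spec j (nleaves a)).
    + destruct (IHa j u H) as (l1 & x & l2 & E1 & E2). exists l1, x, (l2 ++ leaves c).
      simpl. rewrite E1, E2, <- !app_assoc. auto.
    + destruct (IHc (j - nleaves a)%nat u) as (l1 & x & l2 & E1 & E2). unfold nleaves in *; lia.
      exists (leaves a ++ l1), x, l2. simpl. rewrite E1, E2, <- !app_assoc. auto.
Qed.

Lemma insert_lem s : forall k u b, exists l1 l2,
  leaves s = l1 ++ l2 /\ leaves (insert_at s k u b) = l1 ++ (fst u, snd u) :: l2.
Proof.
  assert (Hnew : forall v (u:lit) (b:bool), exists l1 l2, leaves v = l1 ++ l2 /\
     leaves (if b then J (Leaf (fst u) (snd u)) v else J v (Leaf (fst u) (snd u))) = l1 ++ (fst u, snd u) :: l2).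
  { intros v u b. destruct b.
    - exists nil, (leaves v). simpl. auto.
    - exists (leaves v), nil. simpl. rewrite app_nil_r. auto. }
  induction s as [i c|a IHa c IHc]; intros k u b; destruct k as [|k]; try exact (Hnew _ u b).
  cbn [insert_at]. destruct (Nat.ltb_spec k (ssize a)).
  - destruct (IHa k u b) as (l1 & l2 & E1 & E2). exists l1, (l2 ++ leaves c).
    simpl. rewrite E1, E2, <- !app_assoc. auto.
  - destruct (IHc (k - ssize a)%nat u b) as (l1 & l2 & E1 & E2).
    exists (leaves a ++ l1), l2. simpl. rewrite E1, E2, <- !app_assoc. auto.
Qed.

Lemma delete_lem s : forall j, (j < nleaves s)%nat -> exists l1 a l2,
  leaves s = l1 ++ a :: l2 /\ length l1 = j /\ leaflist (delete_at s j) = l1 ++ l2.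
Proof. induction s as [i b|a IHa c IHc]; intros j Hj.
  - exists nil, (i,b), nil. unfold nleaves in Hj; simpl in *. split; auto. split; auto. lia.
  - unfold nleaves in Hj; simpl in Hj; rewrite length_app in Hj. simpl.
    destruct (Nat.ltb_spec j (nleaves a)).
    + destruct (IHa j H) as (l1 & x & l2 & E1 & E2 & E3). exists l1, x, (l2 ++ leaves c).
      rewrite E1, <- !app_assoc. split; auto. split; auto.
      destruct (delete_at a j) as [a'|]; simpl in *.
      * rewrite E3, <- app_assoc. reflexivity.
      * assert (l1 = nil /\ l2 = nil) as [-> ->] by (destruct l1, l2; simpl in E3; try discriminate; auto).
        reflexivity.
    + destruct (IHc (j - nleaves a)%nat) as (l1 & x & l2 & E1 & E2 & E3). unfold nleaves in *; lia.
      exists (leaves a ++ l1), x, l2. rewrite E1, <- !app_assoc. split; auto.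
      split. rewrite length_app. unfold nleaves in *; lia.
      destruct (delete_at c (j - nleaves a)) as [c'|]; simpl in *.
      * rewrite E3. reflexivity.
      * assert (l1 = nil /\ l2 = nil) as [-> ->] by (destruct l1, l2; simpl in E3; try discriminate; auto).
        simpl. rewrite app_nil_r. reflexivity.
Qed.

Lemma terminals_in n u : In u (terminals n) -> (fst u < n)%nat.
Proof. unfold terminals. intros H. apply in_flat_map in H as (i & Hi & H).
  apply in_seq in Hi. simpl in H. destruct H as [<-|[<-|[]]]; simpl; lia. Qed.

Lemma terminals_len n : length (terminals n) = (2 * n)%nat.
Proof. unfold terminals. rewrite <- (length_seq n 0) at 2. generalize (seq 0 n).
  induction l; simpl. reflexivity. rewrite IHl. lia. Qed.

Lemma terminals_sum n f : sumR (terminals n) f = sumR (seq 0 n) (fun i => f (i,true) + f (i,false)).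
Proof. unfold terminals. rewrite sumR_flat_map. apply sumR_ext. intros i _.
  rewrite !sumR_cons, sumR_nil. lra. Qed.

Definition acceptL n w (l l' : list lit) : bool :=
  if Rlt_dec (wm n w l) (wm n w l') then true
  else if Req_EM_T (wm n w l') (wm n w l) then Nat.leb (2 * length l' - 1) (2 * length l - 1)
  else false.

Lemma accept_L n w X Y : accept n w X Y = acceptL n w (leaflist X) (leaflist Y).
Proof. unfold accept, acceptL. rewrite !cplx_L. reflexivity. Qed.

Lemma acc_true n w l l' : acceptL n w l l' = true ->
  wm n w l < wm n w l' \/ (wm n w l' = wm n w l /\ (length l' <= length l)%nat).
Proof. unfold acceptL. destruct (Rlt_dec _ _). auto.
  destruct (Req_EM_T _ _). intros H. apply Nat.leb_le in H. right; split; auto; lia.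
  discriminate. Qed.

Lemma acc_intro n w l l' :
  wm n w l < wm n w l' \/ (wm n w l' = wm n w l /\ (length l' <= length l)%nat) ->
  acceptL n w l l' = true.
Proof. unfold acceptL. intros H. destruct (Rlt_dec _ _). auto.
  destruct (Req_EM_T _ _). destruct H as [H|[_ H]]; [lra| apply Nat.leb_le; lia]. lra. Qed.

Lemma ex_add_other l1 l2 x i : i <> fst x -> ex (l1 ++ x :: l2) i = ex (l1 ++ l2) i.
Proof. intros H. apply ex_other. intros b. rewrite cnt_ins, mt_other; auto. Qed.

Lemma mt_self_t x : mt (fst x) true x = snd x.
Proof. destruct x as [k b]; unfold mt; simpl. rewrite Nat.eqb_refl. destruct b; reflexivity. Qed.
Lemma mt_self_f x : mt (fst x) false x = negb (snd x).
Proof. destruct x as [k b]; unfold mt; simpl. rewrite Nat.eqb_refl. destruct b; reflexivity. Qed.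

Lemma validl_app n l1 l2 : validl n (l1 ++ l2) <-> validl n l1 /\ validl n l2.
Proof. unfold validl. split. intros H; split; intros; apply H; apply in_or_app; auto.
  intros [H1 H2] x Hx. apply in_app_or in Hx as [|]; auto. Qed.

Lemma validl_ins n l1 l2 x : validl n (l1 ++ l2) -> (fst x < n)%nat -> validl n (l1 ++ x :: l2).
Proof. intros H Hx. apply validl_app in H as [H1 H2]. apply validl_app; split; auto.
  intros y [<-|Hy]; auto. Qed.

Lemma validl_del n l1 l2 x : validl n (l1 ++ x :: l2) -> validl n (l1 ++ l2) /\ (fst x < n)%nat.
Proof. intros H. apply validl_app in H as [H1 H2]. split. apply validl_app; split; auto.
  intros y Hy; apply H2; simpl; auto. apply H2; simpl; auto. Qed.

Section Changes.
Variable n : nat.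
Variable w : nat -> R.
Hypothesis Hw : forall i, (i < n)%nat -> 0 < w i.

Lemma add_facts l1 l2 x : validl n (l1 ++ l2) -> (fst x < n)%nat ->
  wm n w (l1 ++ x :: l2) - (if ex (l1 ++ x :: l2) (fst x) then w (fst x) else 0)
   = wm n w (l1 ++ l2) - (if ex (l1 ++ l2) (fst x) then w (fst x) else 0) /\
  (uu n (l1 ++ x :: l2) + (if ex (l1 ++ x :: l2) (fst x) then 1 else 0)
   = uu n (l1 ++ l2) + (if ex (l1 ++ l2) (fst x) then 1 else 0))%nat.
Proof. intros Hv Hx. split.
  apply wm_change; auto. intros i Hi; apply ex_add_other; auto.
  apply uu_change; auto. intros i Hi; apply ex_add_other; auto. Qed.

Lemma ex_add_pos l1 l2 x : snd x = true -> ex (l1 ++ l2) (fst x) = true -> ex (l1 ++ x :: l2) (fst x) = true.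
Proof. unfold ex, exc. rewrite !cnt_ins, mt_self_t, mt_self_f. intros -> H.
  cbv beta iota delta [negb] in *. apply andb_prop in H as [H1 H2]. apply Nat.leb_le in H1, H2.
  apply andb_true_intro; split; apply Nat.leb_le; unfold lit in *; lia. Qed.

Lemma ex_add_neg l1 l2 x : snd x = false -> ex (l1 ++ x :: l2) (fst x) = true -> ex (l1 ++ l2) (fst x) = true.
Proof. unfold ex, exc. rewrite !cnt_ins, mt_self_t, mt_self_f. intros -> H.
  cbv beta iota delta [negb] in *. apply andb_prop in H as [H1 H2]. apply Nat.leb_le in H1, H2.
  apply andb_true_intro; split; apply Nat.leb_le; unfold lit in *; lia. Qed.

Lemma LA l1 l2 x : validl n (l1 ++ l2) -> (fst x < n)%nat ->
  acceptL n w (l1 ++ l2) (l1 ++ x :: l2) = true ->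
  (Phi n (l1 ++ x :: l2) + 1 = Phi n (l1 ++ l2))%nat.
Proof. intros Hv Hx Ha.
  destruct (add_facts l1 l2 x Hv Hx) as [E1 E2].
  pose proof (P1 n _ (validl_ins n l1 l2 x Hv Hx)) as P.
  pose proof (Hw _ Hx) as Hwx.
  apply acc_true in Ha. unfold Phi in *. rewrite !length_app in *. simpl length in *. unfold lit in *.
  destruct (ex (l1 ++ x :: l2) (fst x)), (ex (l1 ++ l2) (fst x)).
  - destruct Ha as [Ha|[_ Ha]]; [lra|lia].
  - lia.
  - destruct Ha as [Ha|[_ Ha]]; [lra|lia].
  - destruct Ha as [Ha|[_ Ha]]; [lra|lia].
Qed.

Lemma LA_prog l1 l2 x : validl n (l1 ++ l2) -> (fst x < n)%nat ->
  snd x = true -> cnt (l1 ++ l2) (fst x) true = 0%nat -> cnt (l1 ++ l2) (fst x) false = 0%nat ->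
  acceptL n w (l1 ++ l2) (l1 ++ x :: l2) = true.
Proof. intros Hv Hx Hs H1 H2.
  destruct (add_facts l1 l2 x Hv Hx) as [E1 _].
  pose proof (Hw _ Hx) as Hwx.
  assert (ex (l1 ++ l2) (fst x) = false) as Ea by (unfold ex, exc; rewrite H1; reflexivity).
  assert (ex (l1 ++ x :: l2) (fst x) = true) as Eb.
  { unfold ex, exc. rewrite !cnt_ins, mt_self_t, mt_self_f, H1, H2, Hs. reflexivity. }
  rewrite Ea, Eb in E1. apply acc_intro. left. lra. Qed.

Definition safe (l : list lit) (x : lit) : bool :=
  implb (ex l (fst x))
    (exc (cnt l (fst x) true - (if snd x then 1 else 0))
         (cnt l (fst x) false - (if snd x then 0 else 1))).

Lemma LD l1 l2 x : validl n (l1 ++ x :: l2) ->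
  acceptL n w (l1 ++ x :: l2) (l1 ++ l2) = true ->
  (Phi n (l1 ++ l2) + 1 <= Phi n (l1 ++ x :: l2))%nat.
Proof. intros Hv0 Ha. destruct (validl_del n l1 l2 x Hv0) as [Hv Hx].
  destruct (add_facts l1 l2 x Hv Hx) as [E1 E2].
  pose proof (P1 n _ Hv) as P.
  pose proof (Hw _ Hx) as Hwx.
  apply acc_true in Ha. unfold Phi in *. rewrite !length_app in *. simpl length in *. unfold lit in *.
  destruct (ex (l1 ++ x :: l2) (fst x)), (ex (l1 ++ l2) (fst x)).
  - lia.
  - destruct Ha as [Ha|[Ha _]]; lra.
  - lia.
  - lia.
Qed.

Lemma LD_prog l1 l2 x : validl n (l1 ++ x :: l2) ->
  safe (l1 ++ x :: l2) x = true ->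
  acceptL n w (l1 ++ x :: l2) (l1 ++ l2) = true.
Proof. intros Hv0 Hs. destruct (validl_del n l1 l2 x Hv0) as [Hv Hx].
  destruct (add_facts l1 l2 x Hv Hx) as [E1 _].
  assert (implb (ex (l1 ++ x :: l2) (fst x)) (ex (l1 ++ l2) (fst x)) = true) as Hi.
  { unfold safe in Hs. unfold ex at 2.
    replace (cnt (l1 ++ l2) (fst x) true) with (cnt (l1 ++ x :: l2) (fst x) true - (if snd x then 1 else 0))%nat.
    replace (cnt (l1 ++ l2) (fst x) false) with (cnt (l1 ++ x :: l2) (fst x) false - (if snd x then 0 else 1))%nat.
    exact Hs.
    rewrite cnt_ins, mt_self_f. destruct (snd x); simpl; lia.
    rewrite cnt_ins, mt_self_t. destruct (snd x); simpl; lia. }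
  apply acc_intro. rewrite !length_app. simpl length. unfold lit in *.
  destruct (ex (l1 ++ x :: l2) (fst x)), (ex (l1 ++ l2) (fst x)); simpl in Hi; try discriminate.
  - right; split; [lra|lia].
  - pose proof (Hw _ Hx). left; lra.
  - right; split; [lra|lia].
Qed.

Lemma LS l1 l2 a b : validl n (l1 ++ a :: l2) -> (fst b < n)%nat ->
  acceptL n w (l1 ++ a :: l2) (l1 ++ b :: l2) = true ->
  (Phi n (l1 ++ b :: l2) <= Phi n (l1 ++ a :: l2))%nat.
Proof. intros Hv0 Hb Ha. destruct (validl_del n l1 l2 a Hv0) as [Hv Hx].
  destruct (add_facts l1 l2 a Hv Hx) as [E1 E2].
  destruct (add_facts l1 l2 b Hv Hb) as [F1 F2].
  pose proof (P1 n _ (validl_ins n l1 l2 b Hv Hb)) as P.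
  pose proof (Hw _ Hx). pose proof (Hw _ Hb).
  apply acc_true in Ha. unfold Phi in *. rewrite !length_app in *. simpl length in *. unfold lit in *.
  assert (wm n w (l1 ++ a :: l2) <= wm n w (l1 ++ b :: l2)) as Hle by (destruct Ha as [|[]]; lra).
  clear Ha.
  destruct (ex (l1 ++ a :: l2) (fst a)), (ex (l1 ++ l2) (fst a)),
    (ex (l1 ++ b :: l2) (fst b)), (ex (l1 ++ l2) (fst b)); lia || lra.
Qed.

End Changes.

Lemma ln_le_sub1 t : 0 < t -> ln t <= t - 1.
Proof. intros Ht. pose proof (exp_ineq1_le (ln t)). rewrite exp_ln in H; lra. Qed.

Lemma ln_mono x y : 0 < x -> x <= y -> ln x <= ln y.
Proof. intros Hx Hy. destruct (Rle_lt_or_eq_dec _ _ Hy). left; apply ln_increasing; lra. subst; lra. Qed.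

Fixpoint Hm (m : nat) : R := match m with O => 0 | S m' => Hm m' + / INR (S m') end.

Lemma Hm_bound m : (1 <= m)%nat -> Hm m <= 1 + ln (INR m).
Proof. induction m as [|m IH]; intros Hm1. lia.
  destruct m as [|k]. simpl. rewrite ln_1. lra.
  specialize (IH ltac:(lia)). cbn [Hm]. cbn [Hm] in IH.
  assert (Hk1 : 0 < INR (S k)) by (apply lt_0_INR; lia).
  assert (Hk2 : 0 < INR (S (S k))) by (apply lt_0_INR; lia).
  assert (E : INR (S (S k)) = INR (S k) + 1) by (rewrite S_INR; reflexivity).
  assert (0 < / INR (S (S k))) by (apply Rinv_0_lt_compat; auto).
  pose proof (ln_le_sub1 _ (Rmult_lt_0_compat _ _ Hk1 H)) as L.
  rewrite ln_mult, ln_Rinv in L; auto.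
  assert (INR (S k) * / INR (S (S k)) - 1 = - / INR (S (S k))) as E2.
  { rewrite E. field. lra. }
  lra.
Qed.

Fixpoint Gf (n m : nat) : R :=
  match m with O => 0 | S m' => Gf n m' + 12 * (INR (S m') + INR n) / INR (S m') end.

Lemma Gf_term_pos n m : 0 <= 12 * (INR (S m) + INR n) / INR (S m).
Proof. assert (0 < INR (S m)) by (apply lt_0_INR; lia). pose proof (pos_INR n).
  unfold Rdiv. apply Rmult_le_pos. lra. left; apply Rinv_0_lt_compat; auto. Qed.

Lemma Gf_mono n m m' : (m' <= m)%nat -> Gf n m' <= Gf n m.
Proof. induction 1. lra. cbn [Gf]. pose proof (Gf_term_pos n m). lra. Qed.

Lemma Gf_nonneg n m : 0 <= Gf n m.
Proof. apply (Gf_mono n m 0). lia. Qed.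

Lemma Gf_drop n m m' : (m' + 1 <= m)%nat -> Gf n m - Gf n m' >= 12 * (INR m + INR n) / INR m.
Proof. intros H. destruct m as [|k]. lia. cbn [Gf]. pose proof (Gf_mono n k m' ltac:(lia)). lra. Qed.

Lemma Gf_H n m : Gf n m = 12 * INR m + 12 * INR n * Hm m.
Proof. induction m. simpl; lra. cbn [Gf Hm]. rewrite IHm.
  assert (0 < INR (S m)) by (apply lt_0_INR; lia). replace (INR m) with (INR (S m) - 1) by (rewrite S_INR; ring). field. lra. Qed.

Lemma n_le n : (1 <= n)%nat -> INR n <= 1 + 2 * INR n * ln (INR n).
Proof. intros H. destruct (Nat.eq_dec n 1) as [->|Hn]. simpl. rewrite ln_1. lra.
  assert (2 <= INR n) by (replace 2 with (INR 2) by (simpl; lra); apply le_INR; lia).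
  pose proof (ln_mono 2 (INR n) ltac:(lra) H0). pose proof ln_lt_2. nra. Qed.

Lemma Gf_final n C m : (1 <= n)%nat -> (m <= C + n)%nat ->
  Gf n m <= 60 * (INR C + INR n * ln (INR n) + 1).
Proof. intros Hn Hm1. eapply Rle_trans. apply (Gf_mono n (C + n) m Hm1).
  rewrite Gf_H, plus_INR.
  assert (Hn0 : 1 <= INR n) by (replace 1 with (INR 1) by reflexivity; apply le_INR; lia).
  pose proof (pos_INR C) as HC.
  pose proof (Hm_bound (C + n) ltac:(lia)) as HB. rewrite plus_INR in HB.
  assert (Hl : ln (INR C + INR n) <= ln (INR n) + INR C / INR n).
  { assert (0 < / INR n) by (apply Rinv_0_lt_compat; lra).
    pose proof (ln_le_sub1 _ (Rmult_lt_0_compat (INR C + INR n) _ ltac:(lra) H)) as L.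
    rewrite ln_mult, ln_Rinv in L; try lra.
    assert ((INR C + INR n) * / INR n - 1 = INR C / INR n) by (field; lra). lra. }
  assert (INR n * ln (INR C + INR n) <= INR n * ln (INR n) + INR C).
  { assert (INR n * (INR C / INR n) = INR C) by (field; lra).
    pose proof (Rmult_le_compat_l (INR n) _ _ ltac:(lra) Hl). lra. }
  pose proof (n_le n Hn).
  assert (0 <= ln (INR n)) by (rewrite <- ln_1; apply ln_mono; lra).
  assert (0 <= INR n * ln (INR n)) by nra.
  nra.
Qed.

Lemma pv (p q : nat) :
  (p + q + 2 * (if exc p q then 0 else 1) <=
   4 * (p * (if implb (exc p q) (exc (p-1) q) then 1 else 0) +
        q * (if implb (exc p q) (exc p (q-1)) then 1 else 0)) +
   2 * (if andb (p =? 0) (q =? 0) then 1 else 0) + 1)%nat.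
Proof. unfold exc.
  destruct (Nat.leb_spec 1 p), (Nat.leb_spec q p), (Nat.leb_spec 1 (p-1)), (Nat.leb_spec q (p-1)),
    (Nat.leb_spec (q-1) p), (Nat.eqb_spec p 0), (Nat.eqb_spec q 0); simpl; lia.
Qed.

Lemma pvR (p q : nat) :
  INR p + INR q + 2 * (if exc p q then 0 else 1) - 1 <=
   4 * (INR p * (if implb (exc p q) (exc (p-1) q) then 1 else 0) +
        INR q * (if implb (exc p q) (exc p (q-1)) then 1 else 0)) +
   2 * (if andb (p =? 0) (q =? 0) then 1 else 0).
Proof. pose proof (pv p q) as H. apply le_INR in H.
  destruct (exc (p-1) q), (exc p (q-1)), (exc p q), (andb (p =? 0) (q =? 0));
  repeat (rewrite ?plus_INR, ?mult_INR in H); simpl in H |- *; lra.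
Qed.

Definition absent (l : list lit) (u : lit) : bool :=
  andb (snd u) (andb (cnt l (fst u) true =? 0) (cnt l (fst u) false =? 0)).

Lemma Phi_R n l : validl n l ->
  INR (Phi n l) = sumR (seq 0 n) (fun i => INR (cnt l i true) + INR (cnt l i false) + 2 * (if ex l i then 0 else 1) - 1).
Proof. intros Hv. pose proof (P1 n l Hv). unfold Phi. rewrite minus_INR by lia.
  rewrite plus_INR, mult_INR, length_R with (n:=n) by auto. rewrite uu_R, (INR_n_sum n).
  rewrite (sumR_minus (seq 0 n) (fun i => INR (cnt l i true) + INR (cnt l i false) + 2 * (if ex l i then 0 else 1)) (fun _ => 1)).
  rewrite (sumR_plus (seq 0 n) (fun i => INR (cnt l i true) + INR (cnt l i false)) (fun i => 2 * (if ex l i then 0 else 1))).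
  rewrite (sumR_scal (seq 0 n) 2 (fun i => if ex l i then 0 else 1)). simpl (INR 2). lra. Qed.

Lemma D_R n l : validl n l ->
  sumR l (fun x => if safe l x then 1 else 0) =
  sumR (seq 0 n) (fun i => INR (cnt l i true) * (if implb (exc (cnt l i true) (cnt l i false)) (exc (cnt l i true - 1) (cnt l i false)) then 1 else 0)
     + INR (cnt l i false) * (if implb (exc (cnt l i true) (cnt l i false)) (exc (cnt l i true) (cnt l i false - 1)) then 1 else 0)).
Proof. intros Hv. rewrite (sigma2 n l _ Hv). apply sumR_ext. intros i _.
  unfold safe. simpl fst; simpl snd. rewrite !Nat.sub_0_r. reflexivity. Qed.

Lemma A_R n l :
  sumR (terminals n) (fun u => if absent l u then 1 else 0) =
  sumR (seq 0 n) (fun i => if andb (cnt l i true =? 0) (cnt l i false =? 0) then 1 else 0).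
Proof. rewrite terminals_sum. apply sumR_ext. intros i _. unfold absent; simpl.
  destruct (andb _ _); lra. Qed.

Lemma key_ineq n l : validl n l ->
  INR (Phi n l) <= 4 * sumR l (fun x => if safe l x then 1 else 0)
                 + 2 * sumR (terminals n) (fun u => if absent l u then 1 else 0).
Proof. intros Hv. rewrite (Phi_R n), (D_R n), A_R by auto. rewrite <- !sumR_scal, <- sumR_plus.
  apply sumR_le. intros i _. unfold ex. apply pvR. Qed.

Lemma Phi_le n l : (length l <= Phi n l + n)%nat /\ (Phi n l <= length l + n)%nat.
Proof. pose proof (uu_le n l). unfold Phi. lia. Qed.

Lemma uu0_ex n l : uu n l = 0%nat -> forall i, (i < n)%nat -> ex l i = true.
Proof. intros H i Hi. destruct (ex l i) eqn:E; auto. exfalso.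
  assert (In i (filter (fun i => negb (ex l i)) (seq 0 n))) as HI.
  { apply filter_In. split. apply in_seq; lia. rewrite E; reflexivity. }
  unfold uu in H. destruct (filter _ _); simpl in *; [contradiction|discriminate]. Qed.

Lemma wm_le_tot n w l : (forall i, (i < n)%nat -> 0 < w i) -> wm n w l <= sumR (seq 0 n) w.
Proof. intros Hw. unfold wm. fold (sumR (seq 0 n) (fun i => if ex l i then w i else 0)).
  apply sumR_le. intros i Hi. apply in_seq in Hi. pose proof (Hw i ltac:(lia)). destruct (ex l i); lra. Qed.

Lemma wm_tot_uu0 n w l : (forall i, (i < n)%nat -> 0 < w i) -> wm n w l = sumR (seq 0 n) w -> uu n l = 0%nat.
Proof. intros Hw H. destruct (uu n l) eqn:E; auto. exfalso.
  unfold uu in E. destruct (filter (fun i => negb (ex l i)) (seq 0 n)) as [|i r] eqn:F; [discriminate|].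
  assert (In i (filter (fun i => negb (ex l i)) (seq 0 n))) as HI by (rewrite F; simpl; auto).
  apply filter_In in HI as [HI Hn]. pose proof HI as HI'. apply in_seq in HI'.
  assert (sumR (seq 0 n) w - wm n w l = sumR (seq 0 n) (fun j => if ex l j then 0 else w j)) as E2.
  { unfold wm. fold (sumR (seq 0 n) (fun i => if ex l i then w i else 0)). rewrite <- sumR_minus.
    apply sumR_ext. intros j _. destruct (ex l j); lra. }
  assert (w i <= sumR (seq 0 n) (fun j => if ex l j then 0 else w j)).
  { pose proof (sumR_ge_term (seq 0 n) (fun j => if ex l j then 0 else w j) i) as G. cbv beta in G.
    destruct (ex l i); [discriminate|]. apply G; auto.
    intros j Hj. apply in_seq in Hj. pose proof (Hw j ltac:(lia)). destruct (ex l j); lra. }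
  pose proof (Hw i ltac:(lia)). lra. Qed.

Lemma Phi0_optimal n w X : (1 <= n)%nat -> (forall i, (i < n)%nat -> 0 < w i) ->
  valid n X -> Phi n (leaflist X) = 0%nat -> optimal n w X.
Proof. intros Hn Hw Hv H0. pose proof (P1 n _ Hv) as P. unfold Phi in H0.
  assert (uu n (leaflist X) = 0%nat /\ length (leaflist X) = n) as [Hu HL] by lia.
  assert (wm n w (leaflist X) = sumR (seq 0 n) w) as Ew.
  { unfold wm. fold (sumR (seq 0 n) (fun i => if ex (leaflist X) i then w i else 0)).
    apply sumR_ext. intros i Hi. apply in_seq in Hi. rewrite (uu0_ex n); auto. lia. }
  split.
  - intros Y HY. rewrite !wmaj_wm, Ew. apply wm_le_tot; auto.
  - intros Y HY HE. rewrite !wmaj_wm, Ew in HE. apply wm_tot_uu0 in HE; auto.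
    pose proof (P1 n _ HY). rewrite !cplx_L. unfold lit in *. lia.
Qed.

Lemma sum_mutate_some n s F :
  sumR (mutate n (Some s)) F =
  sumR (seq 0 (nleaves s)) (fun j => sumR (terminals n) (fun u =>
     F (/3 * / INR (nleaves s) * / INR (length (terminals n)), Some (subst_at s j u))))
  + sumR (seq 0 (ssize s)) (fun k => sumR (terminals n) (fun u => sumR (true :: false :: nil) (fun b =>
     F (/3 * / INR (ssize s) * / INR (length (terminals n)) * / 2, Some (insert_at s k u b)))))
  + sumR (seq 0 (nleaves s)) (fun j => F (/3 * / INR (nleaves s), delete_at s j)).
Proof. unfold mutate. cbv zeta iota beta. rewrite !sumR_app, !sumR_flat_map, sumR_map.
  rewrite Rplus_assoc. f_equal.
  - apply sumR_ext; intros. rewrite sumR_map. reflexivity.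
  - f_equal. apply sumR_ext; intros. rewrite sumR_flat_map. apply sumR_ext; intros. rewrite sumR_map. reflexivity.
Qed.

Lemma sum_mutate_none n F :
  sumR (mutate n None) F = F (/3, None) + sumR (terminals n) (fun u =>
     F (/3 * / INR (length (terminals n)), Some (Leaf (fst u) (snd u)))) + F (/3, None).
Proof. unfold mutate. cbv zeta iota beta. rewrite !sumR_app, sumR_map, !sumR_cons, !sumR_nil. unfold lit. lra. Qed.

Lemma pos_inv x : 0 < x -> 0 <= / x.
Proof. intros; left; apply Rinv_0_lt_compat; auto. Qed.

Lemma INRpos k : (1 <= k)%nat -> 0 < INR k.
Proof. intros; apply lt_0_INR; lia. Qed.

Section Drift.
Variable n : nat.
Variable w : nat -> R.
Hypothesis Hn : (1 <= n)%nat.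
Hypothesis Hw : forall i, (i < n)%nat -> 0 < w i.

Definition Zof X Y := if accept n w X Y then Y else X.
Definition PhiT X := Phi n (leaflist X).
Definition dlt (m : nat) : R := 12 * (INR m + INR n) / INR m.

Lemma Delta_nonneg X Y : (accept n w X Y = true -> (PhiT Y <= PhiT X)%nat) ->
  0 <= Gf n (PhiT X) - Gf n (PhiT (Zof X Y)).
Proof. intros H. unfold Zof. destruct (accept n w X Y) eqn:E.
  pose proof (Gf_mono n (PhiT X) (PhiT Y) (H eq_refl)). lra. lra. Qed.

Lemma Delta_prog X Y : accept n w X Y = true -> (PhiT Y + 1 <= PhiT X)%nat ->
  dlt (PhiT X) <= Gf n (PhiT X) - Gf n (PhiT (Zof X Y)).
Proof. intros H1 H2. unfold Zof. rewrite H1. pose proof (Gf_drop n _ _ H2). unfold dlt. lra. Qed.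


Lemma step_facts X : valid n X -> forall pY, In pY (mutate n X) ->
  0 <= fst pY /\ valid n (snd pY) /\ (accept n w X (snd pY) = true -> (PhiT (snd pY) <= PhiT X)%nat).
Proof.
  intros Hv pY HpY. unfold PhiT. rewrite accept_L.
  assert (Hm : 0 < INR (length (terminals n))) by (rewrite terminals_len; apply INRpos; lia).
  destruct X as [s|].
  - assert (HL : 0 < INR (nleaves s)) by (apply INRpos; apply leaves_ne).
    assert (HK : 0 < INR (ssize s)) by (apply INRpos; pose proof (leaves_ne s); pose proof (ssize_leaves s); lia).
    unfold mutate in HpY. cbv zeta iota beta in HpY.
    apply in_app_or in HpY as [HpY|HpY]; [|apply in_app_or in HpY as [HpY|HpY]].
    + apply in_flat_map in HpY as (j & Hj & HpY). apply in_map_iff in HpY as (u & <- & Hu).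
      apply in_seq in Hj. destruct (subst_lem s j u ltac:(lia)) as (l1 & a & l2 & E1 & E2).
      pose proof (terminals_in n u Hu) as Hun. simpl fst; simpl snd.
      assert (validl n (l1 ++ a :: l2)) as Hv' by (unfold valid in Hv; simpl in Hv; rewrite <- E1; exact Hv).
      split. pose proof (pos_inv _ HL); pose proof (pos_inv _ Hm). repeat apply Rmult_le_pos; lra.
      split. unfold valid; simpl leaflist. rewrite E2. apply validl_ins; auto. apply validl_del in Hv'. tauto.
      simpl leaflist. rewrite E1, E2. intros Ha. apply (LS n w Hw); auto.
    + apply in_flat_map in HpY as (k & Hk & HpY). apply in_flat_map in HpY as (u & Hu & HpY).
      apply in_map_iff in HpY as (b & <- & Hb).
      destruct (insert_lem s k u b) as (l1 & l2 & E1 & E2).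
      pose proof (terminals_in n u Hu) as Hun. simpl fst; simpl snd.
      assert (validl n (l1 ++ l2)) as Hv' by (unfold valid in Hv; simpl in Hv; rewrite <- E1; exact Hv).
      split. pose proof (pos_inv _ HK); pose proof (pos_inv _ Hm). repeat apply Rmult_le_pos; lra.
      split. unfold valid; simpl leaflist. rewrite E2. apply validl_ins; auto.
      simpl leaflist. rewrite E1, E2. intros Ha. pose proof (LA n w Hw l1 l2 (fst u, snd u) Hv' Hun Ha). lia.
    + apply in_map_iff in HpY as (j & <- & Hj). apply in_seq in Hj.
      destruct (delete_lem s j ltac:(lia)) as (l1 & a & l2 & E1 & E2 & E3).
      assert (validl n (l1 ++ a :: l2)) as Hv' by (unfold valid in Hv; simpl in Hv; rewrite <- E1; exact Hv).
      simpl fst; simpl snd.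
      split. pose proof (pos_inv _ HL). repeat apply Rmult_le_pos; lra.
      split. unfold valid. rewrite E3. apply validl_del in Hv'. tauto.
      simpl leaflist. rewrite E1, E3. intros Ha. pose proof (LD n w Hw l1 l2 a Hv' Ha). lia.
  - unfold mutate in HpY. cbv zeta iota beta in HpY.
    apply in_app_or in HpY as [HpY|HpY]; [|apply in_app_or in HpY as [HpY|HpY]].
    + destruct HpY as [<-|[]]. simpl. split. lra. split. exact Hv. lia.
    + apply in_map_iff in HpY as (u & <- & Hu). pose proof (terminals_in n u Hu) as Hun.
      simpl fst; simpl snd. split. pose proof (pos_inv _ Hm). repeat apply Rmult_le_pos; lra.
      split. intros x [<-|[]]. exact Hun.
      intros Ha. pose proof (LA n w Hw nil nil u (fun x (H:In x nil) => match H with end) Hun).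
      simpl in H. destruct u; simpl in *. specialize (H Ha). unfold lit in *. lia.
    + destruct HpY as [<-|[]]. simpl. split. lra. split. exact Hv. lia.
Qed.

End Drift.

Section Drift2.
Variable n : nat.
Variable w : nat -> R.
Hypothesis Hn : (1 <= n)%nat.
Hypothesis Hw : forall i, (i < n)%nat -> 0 < w i.

Lemma mem_subst s j u : (j < nleaves s)%nat -> In u (terminals n) ->
  In (/3 * / INR (nleaves s) * / INR (length (terminals n)), Some (subst_at s j u)) (mutate n (Some s)).
Proof. intros Hj Hu. unfold mutate; cbv zeta iota beta. apply in_or_app; left.
  apply in_flat_map. exists j. split. apply in_seq; lia. apply in_map_iff. exists u; auto. Qed.

Lemma mem_ins s k u b : (k < ssize s)%nat -> In u (terminals n) ->
  In (/3 * / INR (ssize s) * / INR (length (terminals n)) * / 2, Some (insert_at s k u b)) (mutate n (Some s)).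
Proof. intros Hk Hu. unfold mutate; cbv zeta iota beta. apply in_or_app; right. apply in_or_app; left.
  apply in_flat_map. exists k. split. apply in_seq; lia. apply in_flat_map. exists u. split; auto.
  apply in_map_iff. exists b. split; auto. destruct b; simpl; auto. Qed.

Lemma mem_del s j : (j < nleaves s)%nat ->
  In (/3 * / INR (nleaves s), delete_at s j) (mutate n (Some s)).
Proof. intros Hj. unfold mutate; cbv zeta iota beta. apply in_or_app; right. apply in_or_app; right.
  apply in_map_iff. exists j. split; auto. apply in_seq; lia. Qed.

Lemma mem_leaf u : In u (terminals n) ->
  In (/3 * / INR (length (terminals n)), Some (Leaf (fst u) (snd u))) (mutate n None).
Proof. intros Hu. unfold mutate; cbv zeta iota beta. apply in_or_app; right. apply in_or_app; left.
  apply in_map_iff. exists u; auto. Qed.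

Lemma prob_sum X : sumR (mutate n X) fst = 1.
Proof.
  assert (Hm : INR (length (terminals n)) = 2 * INR n) by (rewrite terminals_len, mult_INR; reflexivity).
  assert (0 < INR n) by (apply lt_0_INR; lia).
  destruct X as [s|].
  - rewrite sum_mutate_some. cbn [fst]. rewrite !sumR_const, !length_seq. simpl (length (true :: false :: nil)).
    assert (HL : 0 < INR (nleaves s)) by (apply INRpos; apply leaves_ne).
    assert (HK : 0 < INR (ssize s)) by (apply INRpos; pose proof (leaves_ne s); pose proof (ssize_leaves s); lia).
    rewrite Hm. simpl (INR 2). field. lra.
  - rewrite sum_mutate_none. cbn [fst]. rewrite sumR_const, Hm. field. lra.
Qed.

Lemma dlt_ge m : (1 <= m)%nat -> 12 <= dlt n m.
Proof. intros H. unfold dlt. assert (0 < INR m) by (apply INRpos; auto). pose proof (pos_INR n).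
  apply (Rmult_le_reg_r (INR m)); auto. unfold Rdiv. rewrite Rmult_assoc, Rinv_l; lra. Qed.

Lemma Delta_nn X Y : valid n X -> In Y (mutate n X) ->
  0 <= Gf n (PhiT n X) - Gf n (PhiT n (Zof n w X (snd Y))).
Proof. intros Hv HY. apply Delta_nonneg. intros Ha.
  destruct (step_facts n w Hn Hw X Hv Y HY) as (_ & _ & H). auto. Qed.

Lemma Hsum X : valid n X -> (1 <= PhiT n X)%nat ->
  1 <= sumR (mutate n X) (fun pY => fst pY * (Gf n (PhiT n X) - Gf n (PhiT n (Zof n w X (snd pY))))).
Proof.
  intros Hv HP.
  assert (Hm : INR (length (terminals n)) = 2 * INR n) by (rewrite terminals_len, mult_INR; reflexivity).
  assert (Hn0 : 0 < INR n) by (apply lt_0_INR; lia).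
  pose proof (dlt_ge _ HP) as Hd.
  destruct X as [s|].
  - rewrite sum_mutate_some. cbn [fst snd].
    set (l := leaves s). set (Ph := PhiT n (Some s)).
    assert (Hvl : validl n l) by exact Hv.
    assert (HL : 0 < INR (nleaves s)) by (apply INRpos; apply leaves_ne).
    assert (HK : 0 < INR (ssize s)) by (apply INRpos; pose proof (leaves_ne s); pose proof (ssize_leaves s); lia).
    set (c2 := /3 * / INR (ssize s) * / INR (length (terminals n)) * / 2).
    set (c3 := /3 * / INR (nleaves s)).
    assert (0 <= c2) by (unfold c2; rewrite Hm; repeat apply Rmult_le_pos; try apply pos_inv; lra).
    assert (0 <= c3) by (unfold c3; repeat apply Rmult_le_pos; try apply pos_inv; lra).
    set (A := sumR (terminals n) (fun u => if absent l u then 1 else 0)).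
    set (D := sumR l (fun x => if safe l x then 1 else 0)).
    assert (P1' : 0 <= sumR (seq 0 (nleaves s)) (fun j => sumR (terminals n) (fun u =>
       c3 * / INR (length (terminals n)) *
       (Gf n Ph - Gf n (PhiT n (Zof n w (Some s) (Some (subst_at s j u)))))))).
    { apply sumR_nonneg. intros j Hj. apply sumR_nonneg. intros u Hu. apply in_seq in Hj.
      pose proof (mem_subst s j u ltac:(lia) Hu) as M.
      pose proof (Delta_nn _ _ Hv M). destruct (step_facts n w Hn Hw _ Hv _ M) as (Hp & _).
      apply Rmult_le_pos; [apply Rmult_le_pos; [auto| apply pos_inv; rewrite Hm; lra] | auto]. }
    assert (P2' : INR (ssize s) * (2 * c2 * dlt n Ph * A) <= sumR (seq 0 (ssize s)) (fun k => sumR (terminals n) (fun u =>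
       sumR (true :: false :: nil) (fun b => c2 *
       (Gf n Ph - Gf n (PhiT n (Zof n w (Some s) (Some (insert_at s k u b))))))))).
    { rewrite <- (length_seq (ssize s) 0) at 1. rewrite <- sumR_const.
      apply sumR_le. intros k Hk. apply in_seq in Hk. unfold A. rewrite <- sumR_scal.
      apply sumR_le. intros u Hu. rewrite !sumR_cons, sumR_nil.
      assert (forall b, c2 * dlt n Ph * (if absent l u then 1 else 0) <=
         c2 * (Gf n Ph - Gf n (PhiT n (Zof n w (Some s) (Some (insert_at s k u b)))))) as Hb.
      { intros b. pose proof (mem_ins s k u b ltac:(lia) Hu) as M.
        pose proof (Delta_nn _ _ Hv M) as D0. destruct (step_facts n w Hn Hw _ Hv _ M) as (Hp & _).
        simpl fst in Hp. simpl snd in D0. fold Ph in D0.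
        destruct (absent l u) eqn:Ea.
        - unfold absent in Ea. apply andb_prop in Ea as [Es Ea]. apply andb_prop in Ea as [E1 E2].
          apply Nat.eqb_eq in E1, E2.
          destruct (insert_lem s k u b) as (l1 & l2 & F1 & F2).
          pose proof (terminals_in n u Hu) as Hun.
          assert (validl n (l1 ++ l2)) as Hv' by (unfold l in Hvl; rewrite F1 in Hvl; exact Hvl).
          assert (acceptL n w (l1 ++ l2) (l1 ++ (fst u, snd u) :: l2) = true) as Ha.
          { apply (LA_prog n w Hw); auto. unfold l in E1; rewrite F1 in E1; exact E1.
            unfold l in E2; rewrite F1 in E2; exact E2. }
          pose proof (LA n w Hw l1 l2 (fst u, snd u) Hv' Hun Ha) as HP2.
          assert (dlt n Ph <= Gf n Ph - Gf n (PhiT n (Zof n w (Some s) (Some (insert_at s k u b))))).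
          { apply Delta_prog. rewrite accept_L. simpl leaflist. rewrite F1, F2. exact Ha.
            unfold PhiT, Ph. simpl leaflist. rewrite F1, F2. lia. }
          change (if true then 1 else 0) with 1. nra.
        - change (if false then 1 else 0) with 0. rewrite Rmult_0_r. apply Rmult_le_pos; lra. }
      pose proof (Hb true); pose proof (Hb false). lra. }
    assert (P3' : c3 * dlt n Ph * D <= sumR (seq 0 (nleaves s)) (fun j => c3 *
       (Gf n Ph - Gf n (PhiT n (Zof n w (Some s) (delete_at s j)))))).
    { unfold D. rewrite <- (sumR_nth l (0%nat, true)). rewrite <- sumR_scal.
      apply sumR_le. intros j Hj. apply in_seq in Hj.
      pose proof (mem_del s j ltac:(lia)) as M.
      pose proof (Delta_nn _ _ Hv M) as D0. destruct (step_facts n w Hn Hw _ Hv _ M) as (Hp & _).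
      simpl fst in Hp. simpl snd in D0. fold Ph in D0.
      destruct (delete_lem s j ltac:(lia)) as (l1 & a & l2 & F1 & F2 & F3).
      assert (nth j l (0%nat, true) = a) as Ena by (unfold l; rewrite F1, <- F2; apply nth_middle).
      rewrite Ena.
      destruct (safe l a) eqn:Es.
      - assert (validl n (l1 ++ a :: l2)) as Hv' by (unfold l in Hvl; rewrite F1 in Hvl; exact Hvl).
        assert (acceptL n w (l1 ++ a :: l2) (l1 ++ l2) = true) as Ha.
        { apply (LD_prog n w Hw); auto. unfold l in Es; rewrite F1 in Es; exact Es. }
        pose proof (LD n w Hw l1 l2 a Hv' Ha) as HP3.
        assert (dlt n Ph <= Gf n Ph - Gf n (PhiT n (Zof n w (Some s) (delete_at s j)))).
        { apply Delta_prog. rewrite accept_L. simpl leaflist. rewrite F1, F3. exact Ha.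
          unfold PhiT, Ph. rewrite F3. simpl leaflist. rewrite F1. lia. }
        change (if true then 1 else 0) with 1. nra.
      - change (if false then 1 else 0) with 0. rewrite Rmult_0_r. apply Rmult_le_pos; lra. }
    pose proof (key_ineq n l Hvl) as KI. fold A D in KI.
    destruct (Phi_le n l) as [PL _].
    assert (HPh : Ph = Phi n l) by reflexivity.
    assert (INR (nleaves s) <= INR Ph + INR n) as HLe.
    { rewrite <- plus_INR. apply le_INR. rewrite HPh. unfold nleaves. fold l. lia. }
    assert (1 <= INR Ph) as HPR by (replace 1 with (INR 1) by reflexivity; apply le_INR; auto).
    assert (0 <= A) as HA by (apply sumR_nonneg; intros; destruct (absent _ _); lra).
    assert (0 <= D) as HD by (apply sumR_nonneg; intros; destruct (safe _ _); lra).
    rewrite <- HPh in KI.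
    assert (1 <= INR (ssize s) * (2 * c2 * dlt n Ph * A) + c3 * dlt n Ph * D).
    { unfold c2, c3, dlt. rewrite Hm.
      set (M := INR Ph + INR n). set (P := INR Ph). set (L := INR (nleaves s)). set (K := INR (ssize s)).
      set (N := INR n).
      assert (E : K * (2 * (/ 3 * / K * / (2 * N) * / 2) * (12 * M / P) * A) + / 3 * / L * (12 * M / P) * D
              = (2 * A * (M / N) + 4 * D * (M / L)) / P) by (unfold M, P, L, K, N in *; field; lra).
      rewrite E.
      assert (M / N >= 1) by (apply Rle_ge; apply (Rmult_le_reg_r N); auto; unfold Rdiv; rewrite Rmult_assoc, Rinv_l; unfold M, P, N in *; lra).
      assert (M / L >= 1) by (apply Rle_ge; apply (Rmult_le_reg_r L); auto; unfold Rdiv; rewrite Rmult_assoc, Rinv_l; unfold M, L, P, N in *; lra).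
      assert (A <= A * (M / N)) by (pose proof (Rmult_le_compat_l A 1 (M / N) HA ltac:(lra)); lra).
      assert (D <= D * (M / L)) by (pose proof (Rmult_le_compat_l D 1 (M / L) HD ltac:(lra)); lra).
      assert (P <= 2 * A * (M / N) + 4 * D * (M / L))  by (change (INR Ph) with P in KI; lra).
      change (INR Ph) with P in HPR. apply (Rmult_le_reg_r P). lra. unfold Rdiv. rewrite Rmult_assoc, Rinv_l; lra. }
    lra.
  - rewrite sum_mutate_none. cbn [fst snd].
    assert (Z0 : Zof n w None None = None) by (unfold Zof; destruct (accept n w None None); auto).
    rewrite Z0. set (c := /3 * / INR (length (terminals n))).
    assert (0 <= c) by (unfold c; rewrite Hm; repeat apply Rmult_le_pos; try apply pos_inv; lra).
    assert (c * dlt n (PhiT n None) * INR n <= sumR (terminals n) (fun u =>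
        c * (Gf n (PhiT n None) - Gf n (PhiT n (Zof n w None (Some (Leaf (fst u) (snd u)))))))).
    { assert (INR n = sumR (terminals n) (fun u => if snd u then 1 else 0)) as En.
      { rewrite terminals_sum, INR_n_sum. apply sumR_ext; intros; simpl; lra. }
      rewrite En, <- !sumR_scal. apply sumR_le. intros u Hu.
      pose proof (mem_leaf u Hu) as M.
      pose proof (Delta_nn _ _ Hv M) as D0. destruct (step_facts n w Hn Hw _ Hv _ M) as (Hp & _).
      simpl fst in Hp. simpl snd in D0.
      pose proof (terminals_in n u Hu) as Hun.
      destruct (snd u) eqn:Es.
      - assert (acceptL n w nil (nil ++ (fst u, snd u) :: nil) = true) as Ha.
        { apply (LA_prog n w Hw nil nil); auto; try (intros x []). }
        pose proof (LA n w Hw nil nil (fst u, snd u) (fun x (H:In x nil) => match H with end) Hun Ha) as HP2.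
        assert (dlt n (PhiT n None) <= Gf n (PhiT n None) - Gf n (PhiT n (Zof n w None (Some (Leaf (fst u) (snd u)))))).
        { apply Delta_prog. rewrite accept_L. exact Ha. unfold PhiT. simpl leaflist. simpl in HP2. rewrite Es in HP2 |- *.
          unfold lit in *. lia. }
        change (if true then 1 else 0) with 1. rewrite Es in H0. nra.
      - change (if false then 1 else 0) with 0. rewrite Rmult_0_r. apply Rmult_le_pos; lra. }
    assert (c * dlt n (PhiT n None) * INR n = dlt n (PhiT n None) / 6) by (unfold c; rewrite Hm; field; lra).
    lra.
Qed.

End Drift2.

Section Main.
Variable n : nat.
Variable w : nat -> R.
Hypothesis Hn : (1 <= n)%nat.
Hypothesis Hw : forall i, (i < n)%nat -> 0 < w i.

Lemma drift X : valid n X -> (1 <= PhiT n X)%nat ->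
  sumR (mutate n X) (fun pY => fst pY * Gf n (PhiT n (Zof n w X (snd pY)))) <= Gf n (PhiT n X) - 1.
Proof. intros Hv HP. pose proof (Hsum n w Hn Hw X Hv HP) as Hs. pose proof (prob_sum n Hn X) as Hp.
  rewrite (sumR_ext _ _ (fun pY => Gf n (PhiT n X) * fst pY - fst pY * (Gf n (PhiT n X) - Gf n (PhiT n (Zof n w X (snd pY)))))).
  2:{ intros; ring. }
  rewrite sumR_minus, sumR_scal, Hp. lra. Qed.

Lemma surv_opt t X : optimal n w X -> surv n w t X = 0.
Proof. intros H. destruct t; simpl; destruct (excluded_middle_informative (optimal n w X)); tauto. Qed.

Lemma surv_0 X : ~ optimal n w X -> surv n w 0 X = 1.
Proof. intros H. simpl; destruct (excluded_middle_informative (optimal n w X)); tauto. Qed.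

Lemma surv_S t X : ~ optimal n w X ->
  surv n w (S t) X = sumR (mutate n X) (fun pY => fst pY * surv n w t (Zof n w X (snd pY))).
Proof. intros H. simpl; destruct (excluded_middle_informative (optimal n w X)); tauto. Qed.

Lemma main N : forall X, valid n X -> exp_time_partial n w X N <= Gf n (PhiT n X).
Proof.
  induction N as [|N IH]; intros X Hv.
  - unfold exp_time_partial. simpl. apply Gf_nonneg.
  - change (exp_time_partial n w X (S N)) with (sumR (seq 0 (S N)) (fun t => surv n w t X)).
    destruct (excluded_middle_informative (optimal n w X)) as [Ho|Ho].
    + rewrite (sumR_ext _ _ (fun _ => 0)). rewrite sumR_const. pose proof (Gf_nonneg n (PhiT n X)). lra.
      intros; apply surv_opt; auto.
    + simpl seq. rewrite sumR_cons, surv_0 by auto. rewrite <- seq_shift, sumR_map.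
      rewrite (sumR_ext _ _ (fun t => sumR (mutate n X) (fun pY => fst pY * surv n w t (Zof n w X (snd pY))))).
      2:{ intros; apply surv_S; auto. }
      rewrite sumR_swap.
      assert (1 <= PhiT n X)%nat.
      { destruct (PhiT n X) eqn:E; [|lia]. exfalso. apply Ho. apply Phi0_optimal; auto. }
      pose proof (drift X Hv H).
      assert (sumR (mutate n X) (fun y => sumR (seq 0 N) (fun x => fst y * surv n w x (Zof n w X (snd y))))
        <= sumR (mutate n X) (fun pY => fst pY * Gf n (PhiT n (Zof n w X (snd pY))))).
      { apply sumR_le. intros pY HpY. rewrite sumR_scal.
        destruct (step_facts n w Hn Hw X Hv pY HpY) as (Hp & HvY & _).
        apply Rmult_le_compat_l; auto. apply IH.
        unfold Zof. destruct (accept n w X (snd pY)); auto. }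
      lra.
Qed.

End Main.

Theorem theorem3 :
  exists c : R, 0 < c /\
    forall (n : nat) (w : nat -> R) (X : tree),
      (1 <= n)%nat ->
      (forall i, (i < n)%nat -> 0 < w i) ->
      (forall i, (S i < n)%nat -> w (S i) <= w i) ->
      valid n X ->
      forall N : nat,
        exp_time_partial n w X N <= c * (INR (cplx X) + INR n * ln (INR n) + 1).
Proof.
  exists 60. split. lra.
  intros n w X Hn Hw _ Hv N.
  eapply Rle_trans. apply (main n w Hn Hw N X Hv).
  apply Gf_final; auto.
  unfold PhiT. destruct (Phi_le n (leaflist X)) as [_ H]. rewrite cplx_L. lia.
Qed.
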